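(* Let $p$ be a prime, $q$ a power of $p$, $n\ge1$ odd, $m=\frac{q^n+1}{q+1}$, and let $G\le B(Q_\infty)$ be a subgroup, with $g_0$, $g_w$, $G_1$, $G_2$ as in the context. Let $a\in G_1$ be an element of order $s>1$. Then the number of elements $g\in G$ of the form $g=[a,b,c,d]$ (for some $b,c,d$) such that $\pi(g)$ has order $s$ is $\gcd(g_0,m)\,g_w$ if $s\nmid(q+1)$, and $\gcd(g_0,m)\,\#G_2$ if $s\mid(q+1)$.
   Context: Let $\mathcal C_n=\mathbb{F}_{q^{2n}}(x,y,z)$ be the function field defined by $x^q+x=y^{q+1}$ and $z^m=y^{q^2}-y$. Let $A(P_\infty)$ be the group of symbols $[a,b,c]$ with $a\in\mathbb{F}_{q^2}^*$, $b,c\in\mathbb{F}_{q^2}$, $c^q+c=b^{q+1}$, group law $[a',b',c']\circ[a,b,c]=[a'a,ab'+b,a^{q+1}c'+ab^qb'+c]$. Let $B(Q_\infty)$ be the group of automorphisms $[a,b,c,d]$ of $\mathcal C_n$ given by $x\mapsto a^{q+1}x+ab^qy+c$, $y\mapsto ay+b$, $z\mapsto dz$, where $a\in\mathbb{F}_{q^2}^*$, $b,c\in\mathbb{F}_{q^2}$, $c^q+c=b^{q+1}$, $d\in\mathbb{F}_{q^{2n}}$, $d^m=a$, with group law $[a',b',c',d']\circ[a,b,c,d]=[a'a,ab'+b,a^{q+1}c'+ab^qb'+c,d'd]$. Let $\pi([a,b,c,d])=[a,b,c]$, $\pi_d([a,b,c,d])=d$, $\pi_a([a,b,c,d])=a$.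 For a subgroup $G$: $g_0=\#\pi_d(G)$, $G_1=\pi_a(G)$, $g_w=\#\ker(\pi_d|_G)$, and $G_2=\{b\in\mathbb{F}_{q^2}:[1,b,c]\in\pi(G)\text{ for some }c\}$. *)

(* Defs.v *)
From HB Require Import structures.
From mathcomp Require Import all_boot all_order all_algebra all_field.
Set Implicit Arguments. Unset Strict Implicit. Unset Printing Implicit Defensive.
Import GRing.Theory.
Local Open Scope ring_scope.

(* The ambient field L plays the role of F_{q^{2n}}; F_{q^2} is the subfield
   {x | x^(q^2) = x}.  Elements [a,b,c,d] of B(Q_oo) are quadruples ((a,b),c),d. *)

Section Defs.
Variable L : finFieldType.

Definition quad := (L * L * L * L)%type.
Definition qa (g : quad) : L := g.1.1.1.
Definition qb (g : quad) : L := g.1.1.2.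
Definition qc (g : quad) : L := g.1.2.
Definition qd (g : quad) : L := g.2.

Definition mB (q n : nat) : nat := ((q ^ n).+1 %/ q.+1)%N.

Definition inFq2 (q : nat) (x : L) : bool := x ^+ (q ^ 2) == x.

Definition inB (q n : nat) (g : quad) : bool :=
  [&& qa g != 0, inFq2 q (qa g), inFq2 q (qb g), inFq2 q (qc g),
      qc g ^+ q + qc g == qb g ^+ q.+1 & qd g ^+ mB q n == qa g].

Definition compB (q : nat) (g' g : quad) : quad :=
  (qa g' * qa g, qa g * qb g' + qb g,
   qa g ^+ q.+1 * qc g' + qa g * qb g ^+ q * qb g' + qc g, qd g' * qd g).

Definition idB : quad := (1, 0, 0, 1).

Definition is_subgroupB (q n : nat) (G : {set quad}) : Prop :=
  [/\ {subset G <= inB q n}, idB \in G,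
      {in G &, forall g h, compB q g h \in G} &
      {in G, forall g, exists2 h, h \in G & compB q h g = idB}].

Definition triple := (L * L * L)%type.
Definition piB (g : quad) : triple := (qa g, qb g, qc g).

Definition compA (q : nat) (t' t : triple) : triple :=
  (t'.1.1 * t.1.1, t.1.1 * t'.1.2 + t.1.2,
   t.1.1 ^+ q.+1 * t'.2 + t.1.1 * t.1.2 ^+ q * t'.1.2 + t.2).

Definition idA : triple := (1, 0, 0).

Definition powA (q : nat) (t : triple) (k : nat) : triple := iter k (compA q t) idA.

Definition has_orderA (q : nat) (t : triple) (s : nat) : bool :=
  (powA q t s == idA) && [forall k : 'I_s, (0 < k)%N ==> (powA q t k != idA)].

Definition has_order_mul (a : L) (s : nat) : Prop :=
  a ^+ s = 1 /\ forall k, (0 < k < s)%N -> a ^+ k != 1.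

Definition g0 (G : {set quad}) : nat := #|[set qd g | g in G]|.
Definition gw (G : {set quad}) : nat := #|[set g in G | qd g == 1]|.
Definition G1 (G : {set quad}) : {set L} := [set qa g | g in G].
Definition G2 (G : {set quad}) : {set L} :=
  [set b : L | [exists g in G, (qa g == 1) && (qb g == b)]].

End Defs.

(* Main.v *)
Require Import Defs.
From HB Require Import structures.
From mathcomp Require Import all_boot all_order all_algebra all_field.
From mathcomp Require Import all_fingroup all_solvable.
From mathcomp Require Import ring zify.
Set Implicit Arguments. Unset Strict Implicit. Unset Printing Implicit Defensive.
Import GRing.Theory FinRing.Theory.
Local Open Scope ring_scope.



Section S.
Variable L : finFieldType.
Variable q : nat.
Hypothesis hF : forall x y : L, (x + y) ^+ q = x ^+ q + y ^+ q.
Hypothesis q0 : (0 < q)%N.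

Lemma frobN (x : L) : (- x) ^+ q = - x ^+ q.
Proof.
apply/eqP; rewrite -subr_eq0 opprK -hF addNr expr0n; by case: q q0.
Qed.

Lemma frob1 : (1 : L) ^+ q = 1. Proof. by rewrite expr1n. Qed.

Lemma powA1 (t : triple L) j : (powA q t j).1.1 = t.1.1 ^+ j /\
  (powA q t j).1.2 = t.1.2 * \sum_(i < j) t.1.1 ^+ i.
Proof.
elim: j => [|j [IH1 IH2]]; first by rewrite big_ord0 mulr0 expr0.
rewrite /powA iterS -/(powA q t j) /compA /= IH1 IH2 big_ord_recr /=; split.
  by rewrite exprS.
by ring.
Qed.

Lemma powA_form (a beta c : L) j :
  powA q (a, beta * (1 - a), c) j =
  (a ^+ j, beta * (1 - a ^+ j),
   beta ^+ q.+1 * ((a ^+ j) ^+ q.+1 - a ^+ j) +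
   (c + a * beta ^+ q * (1 - a ^+ q) * beta) * \sum_(i < j) (a ^+ q.+1) ^+ i).
Proof.
elim: j => [|j IH]; first by rewrite big_ord0 !expr0 expr1n subrr !mulr0 addr0.
rewrite /powA iterS -/(powA q _ j) IH /compA /= big_ord_recr /=.
rewrite /Defs.compA /=.
set A := a ^+ j. set S := \sum_(i < j) _.
have e1 : a ^+ j.+1 = a * A by rewrite exprS.
have e2 : (a ^+ q.+1) ^+ j = A * A ^+ q by rewrite exprAC exprS.
rewrite e1 e2 !exprMn hF frobN expr1n !exprS.
congr (_, _, _); ring.
Qed.

Lemma ordA_char (a b c : L) s : (1 < s)%N -> a ^+ s = 1 ->
  (forall k, (0 < k < s)%N -> a ^+ k != 1) ->
  (a ^+ q.+1 == 1 -> s%:R != 0 :> L) ->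
  has_orderA q (a, b, c) s =
  ((a ^+ q.+1 == 1) ==> (c + a * b ^+ q * (b / (1 - a)) == 0)).
Proof.
move=> s1 as1 hk hs.
have a1 : a != 1 by rewrite -[a]expr1; apply: hk; rewrite s1.
have ha : 1 - a != 0 by rewrite subr_eq0 eq_sym.
have hb : b = b / (1 - a) * (1 - a) by rewrite divfK.
set beta := b / (1 - a) in hb *.
have eqc : c + a * b ^+ q * beta = c + a * beta ^+ q * (1 - a ^+ q) * beta.
  rewrite {1}hb exprMn hF frobN expr1n. by rewrite !mulrA.
rewrite eqc /has_orderA.
have -> : [forall k : 'I_s, (0 < k)%N ==> (powA q (a, b, c) k != idA L)] = true.
  apply/forallP => k; apply/implyP => k0.
  have [h1 _] := powA1 (a, b, c) k.
  apply: contra (hk k _); last by rewrite k0 ltn_ord.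
  by move/eqP=> e; rewrite -[a ^+ k]/((a, b, c).1.1 ^+ k) -h1 e.
rewrite andbT hb powA_form as1 expr1n subrr !mulr0 add0r.
set c' := c + _.
set T := \sum_(i < s) _.
have as2 : (a ^+ q.+1) ^+ s = 1 by rewrite exprAC as1 expr1n.
have -> : ((1, 0, c' * T) == idA L) = (c' * T == 0).
  by rewrite /idA !xpair_eqE !eqxx.
case: (boolP (a ^+ q.+1 == 1)) => w /=.
  have -> : T = s%:R.
    rewrite /T (eq_bigr (fun _ => 1)); last by move=> i _; rewrite (eqP w) expr1n.
    by rewrite sumr_const card_ord.
  by rewrite mulf_eq0 (negbTE (hs w)) orbF.
have -> : T = 0.
  apply/eqP; move: (subrX1 (a ^+ q.+1) s); rewrite as2 subrr => /esym/eqP.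
  by rewrite mulf_eq0 subr_eq0 (negbTE w).
by rewrite mulr0 eqxx.
Qed.
End S.


Lemma card_fibers (T U : finType) (f : T -> U) (A : {set T}) c :
  (forall x, x \in A -> #|[set y in A | f y == f x]| = c) -> #|A| = (#|f @: A| * c)%N.
Proof.
move=> hc.
rewrite -sum1_card (partition_big f (mem (f @: A))); last by move=> i iA; apply: imset_f.
rewrite -sum_nat_const; apply: eq_bigr => u /imsetP [x xA ->].
by rewrite -(hc x xA) -sum1_card; apply: eq_bigl => y; rewrite inE.
Qed.

Lemma card_inj2 (T : finType) (A B : {set T}) (f f' : T -> T) :
  injective f -> injective f' -> {in A, forall x, f x \in B} -> {in B, forall x, f' x \in A} ->
  #|A| = #|B|.
Proof.
move=> i1 i2 h1 h2; apply/eqP; rewrite eqn_leq.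
have le1 : (#|A| <= #|B|)%N.
  rewrite -(card_imset A i1); apply: subset_leq_card; apply/subsetP => y.
  by case/imsetP => x xA ->; apply: h1.
have le2 : (#|B| <= #|A|)%N.
  rewrite -(card_imset B i2); apply: subset_leq_card; apply/subsetP => y.
  by case/imsetP => x xA ->; apply: h2.
by rewrite le1 le2.
Qed.

Section B.
Variable L : finFieldType.
Variable q : nat.

Lemma compB_injl (g : quad L) : qa g != 0 -> qd g != 0 -> injective (compB q g).
Proof.
case: g => [[[ga gb] gc] gd]; rewrite /qa /qd /= => ha hd.
move=> [[[xa xb] xc] xd] [[[ya yb] yc] yd]; rewrite /compB /qa /qb /qc /qd /=.
case=> e1 e2 e3 e4.
have ea : xa = ya by apply: (mulfI ha).
subst ya.
have eb : xb = yb by apply: (addrI (xa * gb)).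
subst yb.
have ec : xc = yc by apply: (addrI (xa ^+ q.+1 * gc + xa * xb ^+ q * gb)).
have ed : xd = yd by apply: (mulfI hd).
by subst.
Qed.

Lemma compB_injr (g : quad L) : qa g != 0 -> qd g != 0 -> injective (fun x => compB q x g).
Proof.
case: g => [[[ga gb] gc] gd]; rewrite /qa /qd /= => ha hd.
move=> [[[xa xb] xc] xd] [[[ya yb] yc] yd]; rewrite /compB /qa /qb /qc /qd /=.
case=> e1 e2 e3 e4.
have ea : xa = ya by apply: (mulIf ha).
have eb : xb = yb by apply: (mulfI ha); apply: (addIr gb).
subst ya yb.
have ec : xc = yc.
  apply: (mulfI (expf_neq0 q.+1 ha)); apply: (addIr (ga * gb ^+ q * xb)); apply: (addIr gc).
  by rewrite e3.
have ed : xd = yd by apply: (mulIf hd).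
by subst.
Qed.

Definition powB (g : quad L) j := iter j (compB q g) (idB L).

Lemma piB_powB g j : piB (powB g j) = powA q (piB g) j.
Proof.
elim: j => [|j IH] //.
rewrite /powB iterS -/(powB g j) /powA iterS -/(powA q _ j) -IH.
by case: (powB g j) => [[[xa xb] xc] xd]; move: g {IH} => [[[ga gb] gc] gd].
Qed.

Lemma qd_powB g j : qd (powB g j) = qd g ^+ j.
Proof.
elim: j => [|j IH] //.
rewrite /powB iterS -/(powB g j) exprS -IH.
by case: (powB g j) => [[[xa xb] xc] xd].
Qed.

Lemma powB_in (n : nat) (G : {set quad L}) g j : is_subgroupB q n G -> g \in G -> powB g j \in G.
Proof.
case=> _ h1 hc _ gG; elim: j => [|j IH] //.
by rewrite /powB iterS -/(powB g j) hc.
Qed.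

End B.


Lemma card_roots_in (F : finFieldType) (D : {set F}) m : (0 < m)%N -> 0 \notin D -> 1 \in D ->
  {in D &, forall x y, x * y \in D} -> #|[set d in D | d ^+ m == 1]| = gcdn #|D| m.
Proof.
move=> m0 D0 D1 DM.
pose Du : {set {unit F}} := [set u | val u \in D].
have gDu : group_set Du.
  apply/group_setP; split; first by rewrite inE val_unit1.
  by move=> x y; rewrite !inE val_unitM; apply: DM.
pose H := Group gDu.
have valD : val @: Du = D.
  apply/setP => d; apply/imsetP/idP => [[u uD ->] | dD]; first by rewrite inE in uD.
  have ud : d \is a GRing.unit by rewrite unitfE; apply: contraNneq D0 => <-.
  by exists (Sub d ud : {unit F}); rewrite ?inE SubK.
have cardH : #|H| = #|D| by rewrite -valD card_imset //; apply: val_inj.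
have [x Hx] : exists x, H = <[x]>%G :> {set _} by apply/cyclicP; apply: field_unit_group_cyclic.
set g := gcdn #|D| m.
have g0 : (0 < g)%N by rewrite gcdn_gt0 m0 orbT.
have gD : (g %| #|D|)%N by apply: dvdn_gcdl.
have gm : (g %| m)%N by apply: dvdn_gcdr.
have xH : #[x]%g = #|D| by rewrite -cardH /order -Hx.
apply/eqP; rewrite eqn_leq; apply/andP; split.
  set S := [set d in D | d ^+ m == 1].
  have : all (g.-unity_root) (enum S).
    apply/allP => d; rewrite mem_enum inE => /andP [dD dm].
    rewrite -valD in dD; case/imsetP: dD dm => u uD -> um.
    rewrite unity_rootE -val_unitX -val_unit1 (inj_eq val_inj).
    rewrite -order_dvdn dvdn_gcd -cardH (order_dvdG (uD : u \in H)) /=.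
    by rewrite order_dvdn -(inj_eq val_inj) val_unitX val_unit1.
  move/(max_unity_roots g0)/(_ (enum_uniq _)).
  by rewrite -cardE.
pose y := (x ^+ (#|D| %/ g))%g.
have N0 : (0 < #|D|)%N by apply/card_gt0P; exists 1.
have Ng0 : (0 < #|D| %/ g)%N by rewrite divn_gt0 // dvdn_leq.
have yo : #[y]%g = g.
  rewrite orderXdiv xH; last by rewrite -{2}(divnK gD) dvdn_mulr.
  by rewrite -{1}(divnK gD) mulKn.
have yH : y \in H by rewrite groupX // Hx cycle_id.
have sub1 : val @: <[y]>%G \subset [set d in D | d ^+ m == 1].
  apply/subsetP => d /imsetP [z zy ->]; rewrite inE.
  have zH : z \in H by move: zy; apply/subsetP; rewrite cycle_subG.
  have -> : val z \in D by move: zH; rewrite /H /= inE.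
  rewrite /=.
  rewrite -val_unitX -val_unit1 (inj_eq val_inj) -order_dvdn.
  apply: dvdn_trans gm; rewrite -yo; exact: order_dvdG.
have := subset_leq_card sub1; rewrite card_imset; last exact: val_inj.
by rewrite -yo.
Qed.


Lemma fermatL (L : finFieldType) p N : p \in [pchar L] -> prime p -> (N%:R : L) != 0 ->
  (N%:R : L) ^+ p.-1 = 1.
Proof.
move=> chp pp N0.
have e : (N%:R : L) ^+ p = N%:R by rewrite -pFrobenius_autE rmorph_nat.
apply: (mulfI N0); rewrite mulr1 -exprS prednK //; exact: prime_gt0.
Qed.

Lemma natpm1 (L : finFieldType) p : p \in [pchar L] -> prime p -> (p.-1)%:R = -1 :> L.
Proof.
move=> chp pp; apply/eqP; rewrite -addr_eq0 -mulrSr prednK ?prime_gt0 //.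
by rewrite (pcharf0 chp).
Qed.

Lemma dvd_odd q n : (0 < q)%N -> odd n -> (q.+1 %| (q ^ n).+1)%N.
Proof.
move=> q0 no.
have H : forall i, (q.+1 %| q ^ (2 * i + 1) + 1)%N.
  elim=> [|i IH]; first by rewrite muln0 expn1 addn1.
  have e : (q ^ (2 * i.+1 + 1) + 1 + q.+1 * q.-1 = q ^ 2 * (q ^ (2 * i + 1) + 1))%N.
    rewrite (_ : 2 * i.+1 + 1 = (2 * i + 1) + 2)%N; last by lia.
    rewrite expnD. set X := (q ^ _)%N. rewrite (expnS q 1) expn1. nia.
  have : (q.+1 %| q ^ (2 * i.+1 + 1) + 1 + q.+1 * q.-1)%N.
    by rewrite e; apply: dvdn_mull.
  by rewrite dvdn_addl ?dvdn_mulr.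
have -> : n = (2 * n./2 + 1)%N by rewrite -{1}(odd_double_half n) no; lia.
by rewrite -[(q ^ _).+1]addn1; apply: H.
Qed.

Section C.
Variable L : finFieldType.
Variable q : nat.
Lemma qa_comp (g h : quad L) : qa (compB q g h) = qa g * qa h. Proof. by []. Qed.
Lemma qb_comp (g h : quad L) : qb (compB q g h) = qa h * qb g + qb h. Proof. by []. Qed.
Lemma qc_comp (g h : quad L) : qc (compB q g h) = qa h ^+ q.+1 * qc g + qa h * qb h ^+ q * qb g + qc h.
Proof. by []. Qed.
Lemma qd_comp (g h : quad L) : qd (compB q g h) = qd g * qd h. Proof. by []. Qed.
Lemma quad_ext (x y : quad L) : qa x = qa y -> qb x = qb y -> qc x = qc y -> qd x = qd y -> x = y.
Proof.
by case: x => [[[xa xb] xc] xd]; case: y => [[[ya yb] yc] yd]; rewrite /qa /qb /qc /qd /= => -> -> -> ->.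
Qed.
Lemma piB_E (g : quad L) : piB g = (qa g, qb g, qc g). Proof. by []. Qed.

Hypothesis hF : forall x y : L, (x + y) ^+ q = x ^+ q + y ^+ q.
Hypothesis q0 : (0 < q)%N.
Lemma powA_cycle (a b c : L) j : a != 1 -> a ^+ j = 1 -> a ^+ q.+1 = 1 ->
  powA q (a, b, c) j = (1, 0, (c + a * b ^+ q * (b / (1 - a))) * j%:R).
Proof.
move=> a1 aj aq.
have ha : 1 - a != 0 by rewrite subr_eq0 eq_sym.
have hb : b = b / (1 - a) * (1 - a) by rewrite divfK.
set beta := b / (1 - a) in hb *.
have eqc : c + a * b ^+ q * beta = c + a * beta ^+ q * (1 - a ^+ q) * beta.
  by rewrite {1}hb exprMn hF (frobN hF q0) expr1n !mulrA.
rewrite eqc {1}hb powA_form // aj expr1n subrr !mulr0 add0r.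
congr (_, _, _ * _).
rewrite (eq_bigr (fun _ => 1)); last by move=> i _; rewrite aq expr1n.
by rewrite sumr_const card_ord.
Qed.
End C.

Lemma inv_id (L : finFieldType) q (h x : quad L) : compB q h x = idB L ->
  [/\ qa h * qa x = 1, qa x * qb h + qb x = 0 & qd h * qd x = 1].
Proof.
by case: h => [[[ha hb] hc] hd]; case: x => [[[xa xb] xc] xd]; case.
Qed.

Lemma inG_facts (L : finFieldType) q n (G : {set quad L}) g : is_subgroupB q n G -> g \in G ->
  qa g != 0 /\ qd g ^+ mB q n = qa g.
Proof.
case=> sub _ _ _ /sub; rewrite unfold_in /inB => /and5P [-> _ _ _ /andP [_ /eqP ->]].
by [].
Qed.

Theorem lemma4p3 (p k n : nat) (L : finFieldType) (G : {set quad L}) (a : L) (s : nat) :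
  prime p -> (0 < k)%N -> odd n ->
  #|L| = ((p ^ k) ^ (2 * n))%N ->
  is_subgroupB (p ^ k) n G ->
  a \in G1 G -> (1 < s)%N -> has_order_mul a s ->
  #|[set g in G | (qa g == a) && has_orderA (p ^ k) (piB g) s]| =
  (gcdn (g0 G) (mB (p ^ k) n) *
   (if (s %| (p ^ k).+1)%N then #|G2 G| else gw G))%N.
Proof.
move=> pp k0 nodd cardL sG aG1 s1 [as1 hk].
set q := (p ^ k)%N in sG *.
set m := mB q n.
have chp : p \in [pchar L].
  by apply: (@card_finPcharP _ _ (k * (2 * n))); rewrite // cardL -expnM.
have p0 : (0 < p)%N := prime_gt0 pp.
have q0 : (0 < q)%N by rewrite expn_gt0 p0.
have hF : forall x y : L, (x + y) ^+ q = x ^+ q + y ^+ q.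
  move=> x y; apply: exprDn_pchar.
  by rewrite (eq_pnat _ (pcharf_eq chp)) pnatX pnat_id.
have n0 : (0 < n)%N by move: nodd; case: (n).
have qm : (q.+1 * m = (q ^ n).+1)%N by rewrite mulnC divnK // dvd_odd.
have m0 : (0 < m)%N by move: qm; case: m => //; rewrite muln0.
have pq : (p %| q)%N by rewrite dvdn_exp.
have pm : ~~ (p %| m)%N.
  apply/negP => pm.
  have : (p %| (q ^ n).+1)%N by rewrite -qm dvdn_mull.
  rewrite -addn1 dvdn_addr; last by apply: dvdn_trans pq _; apply: dvdn_exp.
  by rewrite dvdn1 => /eqP p1; rewrite p1 in pp.
have mR : (m%:R : L) != 0 by rewrite -(dvdn_pcharf chp).
have hexp : forall j, (a ^+ j == 1) = (s %| j)%N.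
  move=> j; rewrite {1}(divn_eq j s) exprD mulnC exprM as1 expr1n mul1r.
  rewrite /dvdn; case: (posnP (j %% s)) => [-> | jp]; first by rewrite expr0 eqxx.
  rewrite (negbTE (hk _ _)) ?jp ?ltn_pmod //; last by move: s1; case: (s).
have a1 : a != 1 by rewrite -[a]expr1 hexp; apply/negP => /(dvdn_leq (isT : (0 < 1)%N)); rewrite leqNgt s1.
have ha : 1 - a != 0 by rewrite subr_eq0 eq_sym.
have hsR : a ^+ q.+1 == 1 -> s%:R != 0 :> L.
  rewrite hexp => sq; rewrite -(dvdn_pcharf chp); apply/negP => ps.
  have : (p %| q.+1)%N by apply: dvdn_trans sq.
  by rewrite -addn1 dvdn_addr // dvdn1 => /eqP p1; rewrite p1 in pp.
have ordc : forall g, qa g = a ->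
    has_orderA q (piB g) s = ((a ^+ q.+1 == 1) ==> (qc g + a * qb g ^+ q * (qb g / (1 - a)) == 0)).
  by move=> g ga; rewrite /piB ga; apply: ordA_char.
case: (sG) => Gsub Gid Gc Ginv.
have Gf : forall g, g \in G -> [/\ qa g != 0, qd g != 0 & qd g ^+ m = qa g].
  move=> g gG; have [h1 h2] := inG_facts sG gG; split => //.
  by apply: contraNneq h1 => d0; rewrite -h2 d0 expr0n eqn0Ngt m0.
have Gqd1 : forall g, g \in G -> qd g = 1 -> qa g = 1.
  by move=> g /Gf [_ _ <-] ->; rewrite expr1n.
pose E := [set g in G | qa g == a].
pose K := [set g in G | qa g == 1].
pose Kd := [set g in G | qd g == 1].
pose Z := [set g in G | [&& qa g == 1, qb g == 0 & qd g == 1]].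
pose Fib x := [set y in G | [&& qa y == qa x, qb y == qb x & qd y == qd x]].
have FibZ : forall x, x \in G -> #|Fib x| = #|Z|.
  move=> x xG; have [hx hxG hxx] := Ginv x xG.
  have [i1 i2 i3] := inv_id hxx.
  have [xa xd _] := Gf x xG; have [hxa hxd _] := Gf hx hxG.
  apply: (card_inj2 (f := fun y => compB q y hx) (f' := fun y => compB q y x)).
  - exact: compB_injr.
  - exact: compB_injr.
  - move=> y; rewrite !inE => /andP [yG /and3P [/eqP ya /eqP yb /eqP yd]].
    rewrite Gc //= /compB /qa /qb /qd /= -/(qa y) -/(qa hx) -/(qb y) -/(qb hx) -/(qd y) -/(qd hx).
    rewrite ya yb yd [qa x * _]mulrC i1 eqxx [qd x * _]mulrC i3 eqxx andbT.
    apply/eqP; rewrite -[qb hx]mul1r -i1 -mulrA -mulrDr addrC i2 mulr0 //.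
  - move=> z; rewrite !inE => /andP [zG /and3P [/eqP za /eqP zb /eqP zd]].
    rewrite Gc //= /compB /qa /qb /qd /= -/(qa z) -/(qa x) -/(qb z) -/(qb x) -/(qd z) -/(qd x).
    by rewrite za zb zd mul1r mulr0 add0r mul1r !eqxx.
have [g1 g1G g1a] : exists2 g1, g1 \in G & qa g1 = a.
  by move: aG1; rewrite /G1 => /imsetP [g gG ->]; exists g.
have [h1 h1G h1g1] := Ginv g1 g1G.
have [j1 _ _] := inv_id h1g1.
have EK : #|E| = #|K|.
  apply: (card_inj2 (f := compB q h1) (f' := compB q g1)).
  - by have [? ? _] := Gf h1 h1G; apply: compB_injl.
  - by have [? ? _] := Gf g1 g1G; apply: compB_injl.
  - move=> y; rewrite !inE => /andP [yG /eqP ya].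
    by rewrite Gc //= qa_comp ya -g1a j1.
  - move=> y; rewrite !inE => /andP [yG /eqP ya].
    by rewrite Gc //= qa_comp ya mulr1 g1a.
have KD : #|K| = (#|[set qd x | x in K]| * #|Kd|)%N.
  apply: card_fibers => x; rewrite inE => /andP [xG /eqP xa].
  have [hx hxG hxx] := Ginv x xG; have [i1 i2 i3] := inv_id hxx.
  apply: (card_inj2 (f := compB q hx) (f' := compB q x)).
  - by have [? ? _] := Gf hx hxG; apply: compB_injl.
  - by have [? ? _] := Gf x xG; apply: compB_injl.
  - move=> y; rewrite !inE => /andP [/andP [yG _] /eqP yd].
    by rewrite Gc //= yd i3.
  - move=> y; rewrite !inE => /andP [yG /eqP yd].
    by rewrite Gc //= qa_comp xa (Gqd1 y yG yd) mulr1 yd mulr1 !eqxx.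
have Dg : #|[set qd x | x in K]| = gcdn (g0 G) m.
  have -> : [set qd x | x in K] = [set d in [set qd x | x in G] | d ^+ m == 1].
    apply/setP => d; rewrite inE; apply/imsetP/andP => [[x xK ->] | [/imsetP [x xG ->] dm]].
      rewrite inE in xK; case/andP: xK => xG /eqP xa; split; first exact: imset_f.
      by have [_ _ e] := Gf x xG; rewrite e xa.
    exists x => //; rewrite inE xG /=.
    by have [_ _ e] := Gf x xG; rewrite -e.
  rewrite /g0; apply: card_roots_in => //.
  - apply/imsetP => [[x xG e]]; have [_ xd _] := Gf x xG.
    by rewrite -e eqxx in xd.
  - by apply/imsetP; exists (idB L).
  - move=> _ _ /imsetP [x xG ->] /imsetP [y yG ->]; apply/imsetP.
    by exists (compB q x y); [apply: Gc | ].
case: ifP => sq; last first.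
  have -> : [set g in G | (qa g == a) && has_orderA q (piB g) s] = E.
    apply/setP => g; rewrite !inE; case: (boolP (g \in G)) => //= gG.
    case: (boolP (qa g == a)) => //= /eqP ga.
    by rewrite ordc // hexp sq.
  by rewrite EK KD Dg /gw.
have aq1 : a ^+ q.+1 == 1 by rewrite hexp.
have p1 : (0 < p.-1)%N by rewrite -subn1 subn_gt0 prime_gt1.
have Z0 : (0 < #|Z|)%N by apply/card_gt0P; exists (idB L); rewrite !inE Gid !eqxx.
pose f2 := fun g : quad L => (qb g, qd g).
have ET : #|E| = (#|f2 @: E| * #|Z|)%N.
  apply: card_fibers => x; rewrite inE => /andP [xG /eqP xa]; rewrite -(FibZ x xG).
  apply: eq_card => y; rewrite !inE /f2 xpair_eqE xa.
  by rewrite -!andbA.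
set T := [set g in G | _].
have TT : #|T| = #|f2 @: E|.
  rewrite -(card_in_imset (f := f2)); last first.
    move=> y1 y2; rewrite !inE => /andP [y1G /andP [/eqP y1a o1]] /andP [y2G /andP [/eqP y2a o2]].
    rewrite /f2 => -[eb ed].
    rewrite ordc // aq1 /= addr_eq0 in o1; rewrite ordc // aq1 /= addr_eq0 in o2.
    apply: quad_ext => //; first by rewrite y1a y2a.
    by rewrite (eqP o1) (eqP o2) eb.
  apply: eq_card => u; apply/imsetP/imsetP => [[y yT ->] | [e eE ->]].
    exists y => //; rewrite inE in yT; rewrite /E inE; by case/andP: yT => -> /andP [-> _].
  rewrite inE in eE; case/andP: eE => eG /eqP ea.
  have [_ _ edm] := Gf e eG.
  set N := (m * s)%N; set j := (p.-1 * N ^ p.-1)%N.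
  have Nj : (N %| j)%N by apply: dvdn_mull; apply: dvdn_exp.
  have sj : (s %| j)%N by apply: dvdn_trans Nj; apply: dvdn_mull.
  have NR : (N%:R : L) != 0.
    rewrite -(dvdn_pcharf chp) Euclid_dvdM // negb_or pm /=.
    by rewrite (dvdn_pcharf chp) hsR.
  have jR : (j%:R : L) = -1 by rewrite natrM natrX fermatL // mulr1 natpm1.
  pose z := powB q e j.
  have zG : z \in G by apply: powB_in sG eG.
  have zd : qd z = 1.
    rewrite qd_powB -(divnK Nj) mulnC exprM exprM edm ea.
    by rewrite as1 !expr1n.
  have zpi : piB z = (1, 0, - (qc e + a * qb e ^+ q * (qb e / (1 - a)))).
    rewrite piB_powB piB_E ea powA_cycle //; last first.
    - exact/eqP.
    - by apply/eqP; rewrite hexp.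
    by rewrite jR mulrN1.
  clearbody z.
  have za : qa z = 1 by move: zpi; rewrite piB_E; case.
  have zb : qb z = 0 by move: zpi; rewrite piB_E; case.
  have zc : qc z = - (qc e + a * qb e ^+ q * (qb e / (1 - a))) by move: zpi; rewrite piB_E; case.
  exists (compB q z e); last by rewrite /f2 qb_comp qd_comp zb zd mulr0 add0r mul1r.
  rewrite inE Gc //= qa_comp za mul1r ea eqxx /= ordc; last by rewrite qa_comp za mul1r.
  rewrite aq1 /= qb_comp qc_comp zb zc ea (eqP aq1) !mulr0 !add0r addr0 mul1r.
  by apply/eqP; ring.
have KdZ : #|Kd| = (#|G2 G| * #|Z|)%N.
  have -> : G2 G = [set qb x | x in Kd].
    apply/setP => b; rewrite /G2 inE; apply/existsP/imsetP.
      case=> g /andP [gG /andP [/eqP ga /eqP gb]].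
      exists (powB q g (m ^ p.-1)).
        rewrite inE (powB_in _ sG gG) /= qd_powB.
        have [_ _ gdm] := Gf g gG.
        rewrite -(divnK (dvdn_exp (m := m) p1 (dvdnn m))) mulnC exprM gdm ga.
        by rewrite !expr1n.
      have := powA1 q (piB g) (m ^ p.-1); rewrite -piB_powB !piB_E /= => -[_ ->].
      rewrite ga gb (eq_bigr (fun _ => 1)); last by move=> i _; rewrite expr1n.
      by rewrite sumr_const card_ord natrX fermatL // mulr1.
    case=> y; rewrite inE => /andP [yG /eqP yd] ->.
    by exists y; rewrite yG (Gqd1 y yG yd) !eqxx.
  apply: card_fibers => x; rewrite inE => /andP [xG /eqP xd]; rewrite -(FibZ x xG).
  apply: eq_card => y; rewrite !inE xd (Gqd1 x xG xd).
  case: (boolP (y \in G)) => //= yG.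
  case: (boolP (qd y == 1)) => /= yd; last by rewrite !andbF.
  by rewrite (Gqd1 y yG (eqP yd)) eqxx /= andbT.
apply/eqP; rewrite -(eqn_pmul2r Z0) TT -ET EK KD Dg KdZ mulnA.
done.
Qed.
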